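(* Let $((A,\cdot),N)$ be a Nijenhuis algebra, $((M,\triangleright,\triangleleft),N_M)$ a Nijenhuis bimodule, and $0\to((M,0),N_M)\xrightarrow{i}((E,\cdot_E),N_E)\xrightarrow{p}((A,\cdot),N)\to0$ an abelian extension whose induced Nijenhuis bimodule structure on $M$ is the given one. Fix a linear section $s$ of $p$ and let $(\chi,F)$ be the associated 2-cocycle. Then a pair $(\beta,\alpha)\in\mathrm{Aut}(M,N_M)\times\mathrm{Aut}(A,N)$ is inducible if and only if: (I) $\beta(a\triangleright u)=\alpha(a)\triangleright\beta(u)$ and $\beta(u\triangleleft a)=\beta(u)\triangleleft\alpha(a)$ for all $a\in A$, $u\in M$; and (II) there exists a linear map $\lambda:A\to M$ with $\beta(\chi(a,b))-\chi(\alpha(a),\alpha(b))=\alpha(a)\triangleright\lambda(b)+\lambda(a)\triangleleft\alpha(b)-\lambda(a\cdot b)$ and $\beta(F(a))-F(\alpha(a))=N_M(\lambda(a))-\lambda(N(a))$ for all $a,b\in A$.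
   Context: Over a field of characteristic $0$. Nijenhuis algebra: associative $(A,\cdot)$ with linear $N$, $N(a)N(b)=N(N(a)b+aN(b)-N(ab))$; homomorphisms are algebra maps commuting with the operators. Nijenhuis bimodule: $A$-bimodule with linear $N_M$ such that $N(a)\triangleright N_M(u)=N_M(N(a)\triangleright u+a\triangleright N_M(u)-N_M(a\triangleright u))$ and $N_M(u)\triangleleft N(a)=N_M(N_M(u)\triangleleft a+u\triangleleft N(a)-N_M(u\triangleleft a))$. An abelian extension is a Nijenhuis algebra $((E,\cdot_E),N_E)$ with a short exact sequence of Nijenhuis algebra homomorphisms as displayed, $M$ having zero multiplication; identify $M$ with $i(M)$. Its induced bimodule structure is $a\triangleright u=s(a)\cdot_Eu$, $u\triangleleft a=u\cdot_Es(a)$ for any section $s$. For the section $s$, $\chi(a,b)=s(a)\cdot_Es(b)-s(a\cdot b)\in M$ and $F(a)=N_E(s(a))-s(N(a))\in M$. $\mathrm{Aut}(A,N)$: algebra automorphisms of $A$ commuting with $N$; $\mathrm{Aut}(M,N_M)$: linear bijections $\beta:M\to M$ with $\beta N_M=N_M\beta$; $\mathrm{Aut}_M(E,N_E)$: Nijenhuis algebra automorphisms $\varphi$ of $E$ with $\varphi(M)\subseteq M$. For such $\varphi$, $\tau(\varphi)=(\varphi|_M,\ p\varphi s)\in\mathrm{Aut}(M,N_M)\times\mathrm{Aut}(A,N)$ (independent of $s$). A pair $(\beta,\alpha)$ is inducible if $(\beta,\alpha)=\tau(\varphi)$ for some $\varphi\in\mathrm{Aut}_M(E,N_E)$. *)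

(* Defs.v *)
(* Vector spaces over a field K of characteristic 0 are
   modelled as lmodType K; (possibly non-unital) associative algebras are
   given by an explicit bilinear associative multiplication. *)
From HB Require Import structures.
From mathcomp Require Import all_boot all_order all_algebra.
Set Implicit Arguments. Unset Strict Implicit. Unset Printing Implicit Defensive.
Import GRing.Theory.
Local Open Scope ring_scope.

Section Defs.
Variable K : fieldType.

Definition is_linear (U V : lmodType K) (f : U -> V) : Prop :=
  forall (k : K) (x y : U), f (k *: x + y) = k *: f x + f y.

Definition assoc_alg (A : lmodType K) (mul : A -> A -> A) : Prop :=
  [/\ forall b, is_linear (fun a => mul a b),
      forall a, is_linear (fun b => mul a b) &
      forall a b c, mul (mul a b) c = mul a (mul b c)].

Definition nijenhuis_alg (A : lmodType K) (mul : A -> A -> A) (N : A -> A) : Prop :=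
  [/\ assoc_alg mul, is_linear N &
      forall a b, mul (N a) (N b) = N (mul (N a) b + mul a (N b) - N (mul a b))].

(* A-bimodule (M, l, r) : l a u = a |> u, r u a = u <| a *)
Definition bimodule (A M : lmodType K) (mul : A -> A -> A)
  (l : A -> M -> M) (r : M -> A -> M) : Prop :=
  [/\ forall u, is_linear (fun a => l a u), forall a, is_linear (l a),
      forall a, is_linear (fun u => r u a), forall u, is_linear (r u) &
      [/\ forall a b u, l (mul a b) u = l a (l b u),
          forall a b u, r u (mul a b) = r (r u a) b &
          forall a b u, l a (r u b) = r (l a u) b]].

Definition nijenhuis_bimodule (A M : lmodType K) (mul : A -> A -> A) (N : A -> A)
  (l : A -> M -> M) (r : M -> A -> M) (NM : M -> M) : Prop :=
  [/\ bimodule mul l r, is_linear NM,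
      forall a u, l (N a) (NM u) = NM (l (N a) u + l a (NM u) - NM (l a u)) &
      forall a u, r (NM u) (N a) = NM (r (NM u) a + r u (N a) - NM (r u a))].

(* Abelian extension 0 -> ((M,0),NM) -i-> ((E,mulE),NE) -p-> ((A,mul),N) -> 0:
   (E,mulE,NE) is a Nijenhuis algebra, i and p are Nijenhuis algebra
   homomorphisms (M carrying the zero multiplication), i injective,
   p surjective, and ker p = im i. *)
Definition abelian_extension (A M E : lmodType K) (mul : A -> A -> A) (N : A -> A)
  (NM : M -> M) (mulE : E -> E -> E) (NE : E -> E) (i : M -> E) (p : E -> A) : Prop :=
  [/\ nijenhuis_alg mulE NE, is_linear i, is_linear p,
      [/\ forall u v, mulE (i u) (i v) = i 0, forall u, NE (i u) = i (NM u),
          forall x y, p (mulE x y) = mul (p x) (p y) &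
          forall x, p (NE x) = N (p x)] &
      [/\ injective i, forall a, exists x, p x = a &
          forall x, p x = 0 <-> exists u, x = i u]].

Definition linear_section (A E : lmodType K) (p : E -> A) (s : A -> E) : Prop :=
  is_linear s /\ forall a, p (s a) = a.

Definition nijenhuis_alg_aut (A : lmodType K) (mul : A -> A -> A) (N : A -> A)
  (alpha : A -> A) : Prop :=
  [/\ is_linear alpha, bijective alpha,
      forall a b, alpha (mul a b) = mul (alpha a) (alpha b) &
      forall a, alpha (N a) = N (alpha a)].

Definition nijenhuis_mod_aut (M : lmodType K) (NM : M -> M) (beta : M -> M) : Prop :=
  [/\ is_linear beta, bijective beta & forall u, beta (NM u) = NM (beta u)].

Definition aut_M (M E : lmodType K) (mulE : E -> E -> E) (NE : E -> E)
  (i : M -> E) (phi : E -> E) : Prop :=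
  nijenhuis_alg_aut mulE NE phi /\ forall u, exists v, phi (i u) = i v.

(* (beta, alpha) is inducible: (beta, alpha) = tau(phi) = (phi|_M, p phi s) *)
Definition inducible (A M E : lmodType K) (mulE : E -> E -> E) (NE : E -> E)
  (i : M -> E) (p : E -> A) (s : A -> E) (beta : M -> M) (alpha : A -> A) : Prop :=
  exists phi : E -> E, aut_M mulE NE i phi /\
    (forall u, phi (i u) = i (beta u)) /\ (forall a, p (phi (s a)) = alpha a).

End Defs.

(* Main.v *)
Require Import Defs.
From HB Require Import structures.
From mathcomp Require Import all_boot all_order all_algebra.
Import GRing.Theory.
Local Open Scope ring_scope.
Set Implicit Arguments.

Lemma lin0 (K : fieldType) (U V : lmodType K) (f : U -> V) :
  is_linear f -> f 0 = 0.
Proof.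
move=> H; have := H 1 0 0; rewrite !scale1r addr0.
by move=> /(congr1 (fun z => z - f 0)); rewrite subrr addrK => <-.
Qed.

Lemma linD (K : fieldType) (U V : lmodType K) (f : U -> V) :
  is_linear f -> forall x y, f (x + y) = f x + f y.
Proof. by move=> H x y; have := H 1 x y; rewrite !scale1r. Qed.

Lemma linZ (K : fieldType) (U V : lmodType K) (f : U -> V) :
  is_linear f -> forall k x, f (k *: x) = k *: f x.
Proof. by move=> H k x; have := H k x 0; rewrite !addr0 (lin0 H) addr0. Qed.

Lemma linN (K : fieldType) (U V : lmodType K) (f : U -> V) :
  is_linear f -> forall x, f (- x) = - f x.
Proof. by move=> H x; rewrite -scaleN1r (linZ H) scaleN1r. Qed.

Lemma linB (K : fieldType) (U V : lmodType K) (f : U -> V) :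
  is_linear f -> forall x y, f (x - y) = f x - f y.
Proof. by move=> H x y; rewrite (linD H) (linN H). Qed.

Lemma is_linear_comp (K : fieldType) (U V W : lmodType K) (f : V -> W) (g : U -> V) :
  is_linear f -> is_linear g -> is_linear (fun x => f (g x)).
Proof. by move=> Hf Hg k x y; rewrite Hg Hf. Qed.

Lemma zA (V : zmodType) (X u S w : V) : X + u - (S + w) - (X - S) = u - w.
Proof. by rewrite opprD opprB addrACA addrC !addrA subrK addrAC [- S - w + S]addrAC addNr add0r addrC. Qed.

Lemma zC (V : zmodType) (L n c m : V) : L + ((n - L + c) + m) = c + (n + m).
Proof. by rewrite [n - L]addrC -!addrA addNKr addrCA. Qed.

Lemma zB (V : zmodType) (L l1 r1 c l2 r2 : V) :
  L + ((l1 + r1 - L + c) + l2 + r2) = c + (l1 + l2) + (r1 + r2).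
Proof. by rewrite [l1 + r1 - L]addrC -!addrA addNKr (addrCA r1 c) (addrCA l1 c) (addrCA r1 l2). Qed.

Unset Implicit Arguments.

Theorem proposition5p1 (K : fieldType) (charK0 : [pchar K] =i pred0)
  (A M E : lmodType K)
  (mul : A -> A -> A) (N : A -> A)
  (l : A -> M -> M) (r : M -> A -> M) (NM : M -> M)
  (mulE : E -> E -> E) (NE : E -> E) (i : M -> E) (p : E -> A)
  (s : A -> E) (chi : A -> A -> M) (F : A -> M)
  (HA : nijenhuis_alg mul N)
  (HM : nijenhuis_bimodule mul N l r NM)
  (HE : abelian_extension mul N NM mulE NE i p)
  (Hs : linear_section p s)
  (* the induced bimodule structure on M (= i(M)) is the given one *)
  (Hl : forall a u, mulE (s a) (i u) = i (l a u))
  (Hr : forall a u, mulE (i u) (s a) = i (r u a))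
  (* the 2-cocycle (chi, F) associated with s *)
  (Hchi : forall a b, i (chi a b) = mulE (s a) (s b) - s (mul a b))
  (HF : forall a, i (F a) = NE (s a) - s (N a))
  (beta : M -> M) (alpha : A -> A)
  (Hbeta : nijenhuis_mod_aut NM beta)
  (Halpha : nijenhuis_alg_aut mul N alpha) :
  inducible mulE NE i p s beta alpha <->
  ((forall a u, beta (l a u) = l (alpha a) (beta u)) /\
   (forall a u, beta (r u a) = r (beta u) (alpha a))) /\
  (exists lambda : A -> M, is_linear lambda /\
     (forall a b, beta (chi a b) - chi (alpha a) (alpha b)
                  = l (alpha a) (lambda b) + r (lambda a) (alpha b) - lambda (mul a b)) /\
     (forall a, beta (F a) - F (alpha a) = NM (lambda a) - lambda (N a))).
Proof.
case: HA => [[mull mulr _] Nlin _].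
case: HM => [[llin1 llin2 rlin1 rlin2 _] NMlin _ _].
case: HE => [[[mulEl mulEr _] NElin _] ilin plin [mii Ni pmul pN] [iinj psurj kerp]].
case: Hs => [slin ps].
case: Hbeta => [blin [binv bK Kb] bN].
case: Halpha => [alin [ainv aK Ka] amul aN].
have i0 : i 0 = 0 := lin0 ilin.
have pi u : p (i u) = 0 by apply/kerp; exists u.
have mii0 u v : mulE (i u) (i v) = 0 by rewrite mii i0.
have exth x : exists u, i u == x - s (p x).
  have /kerp [u ->] : p (x - s (p x)) = 0 by rewrite (linB plin) ps subrr.
  by exists u.
pose th x := xchoose (exth x).
have thP x : i (th x) = x - s (p x) by exact/eqP/(xchooseP (exth x)).
have dec x : x = s (p x) + i (th x) by rewrite thP addrC subrK.
have pf a u : p (s a + i u) = a by rewrite (linD plin) ps pi addr0.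
have thf a u : th (s a + i u) = u by apply: iinj; rewrite thP pf addrAC subrr add0r.
have thlin : is_linear th.
  move=> k x y; apply: iinj; rewrite (linD ilin) (linZ ilin) !thP.
  rewrite (linD plin) (linZ plin) (linD slin) (linZ slin) scalerBr.
  by rewrite opprD addrACA.
have mulEDl x y b : mulE (x + y) b = mulE x b + mulE y b := linD (mulEl b) x y.
have mulEDr a x y : mulE a (x + y) = mulE a x + mulE a y := linD (mulEr a) x y.
have mulEBl x y b : mulE (x - y) b = mulE x b - mulE y b := linB (mulEl b) x y.
have mulEBr a x y : mulE a (x - y) = mulE a x - mulE a y := linB (mulEr a) x y.
have iD := linD ilin. have iB := linB ilin.
have NED := linD NElin. have NEB := linB NElin.
split.
  case=> phi [[[philin [phinv pK Kp] phimul phiN] _] [phii phis]].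
  pose lam a := th (phi (s a)).
  have phisa a : phi (s a) = s (alpha a) + i (lam a).
    by rewrite /lam {1}[phi (s a)]dec phis.
  have phiB := linB philin.
  split; first split.
  - move=> a u; apply: iinj; rewrite -phii -Hl phimul phisa phii.
    by rewrite mulEDl Hl mii0 addr0.
  - move=> a u; apply: iinj; rewrite -phii -Hr phimul phisa phii.
    by rewrite mulEDr Hr mii0 addr0.
  exists lam; split; first exact: (is_linear_comp thlin (is_linear_comp philin slin)).
  split.
  - move=> a b; apply: iinj; rewrite !iB iD -phii Hchi Hchi phiB phimul !phisa amul.
    rewrite mulEDl !mulEDr Hl Hr mii0 addr0.
    by rewrite -[_ + i _ + i _]addrA zA.
  - move=> a; apply: iinj; rewrite !iB -phii HF HF phiB phiN !phisa aN.
    by rewrite NED Ni zA.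
case=> [[HIl HIr] [lam [lamlin [Hlchi HlF]]]].
pose phi x := s (alpha (p x)) + i (lam (p x) + beta (th x)).
pose psi x := s (ainv (p x)) + i (binv (th x - lam (ainv (p x)))).
have phif a u : phi (s a + i u) = s (alpha a) + i (lam a + beta u) by rewrite /phi pf thf.
have comb k a u b v : k *: (s a + i u) + (s b + i v) = s (k *: a + b) + i (k *: u + v).
  by rewrite slin ilin scalerDr addrACA.
have betaD := linD blin.
have lD a := linD (llin2 a).
have rD a x y : r (x + y) a = r x a + r y a := linD (rlin1 a) x y.
have NMD := linD NMlin.
have mulform a u b v : mulE (s a + i u) (s b + i v) = s (mul a b) + i (chi a b + l a v + r u b).
  rewrite mulEDl !mulEDr Hl Hr mii0 addr0.
  have -> : mulE (s a) (s b) = s (mul a b) + i (chi a b) by rewrite Hchi addrC subrK.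
  by rewrite !iD !addrA.
have NEform a u : NE (s a + i u) = s (N a) + i (F a + NM u).
  rewrite NED Ni.
  have -> : NE (s a) = s (N a) + i (F a) by rewrite HF addrC subrK.
  by rewrite iD addrA.
have phii u : phi (i u) = i (beta u).
  by rewrite -[i u]add0r -(lin0 slin) phif (lin0 alin) (lin0 slin) add0r (lin0 lamlin) add0r.
exists phi; split; [split; [split|] | split].
- move=> k x y; rewrite (dec x) (dec y) comb !phif alin lamlin blin comb.
  by rewrite scalerDr addrACA.
- exists psi.
    move=> x; rewrite {1}(dec x) phif /psi pf thf aK.
    by rewrite addrAC subrr add0r bK -dec.
  move=> x; rewrite /psi phif Ka Kb [lam _ + _]addrC subrK.
  by rewrite [RHS]dec.
- move=> x y; rewrite (dec x) (dec y) mulform !phif mulform amul; congr (_ + i _).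
  move: (p x) (p y) (th x) (th y) => a b u v.
  rewrite !betaD HIl HIr lD rD.
  have -> : beta (chi a b) = l (alpha a) (lam b) + r (lam a) (alpha b) - lam (mul a b)
     + chi (alpha a) (alpha b) by apply/eqP; rewrite -subr_eq Hlchi.
  exact: zB.
- move=> x; rewrite (dec x) NEform !phif NEform aN; congr (_ + i _).
  move: (p x) (th x) => a u.
  rewrite betaD bN NMD.
  have -> : beta (F a) = NM (lam a) - lam (N a) + F (alpha a)
    by apply/eqP; rewrite -subr_eq HlF.
  exact: zC.
- by move=> u; exists (beta u).
- exact: phii.
- by move=> a; rewrite -[s a]addr0 -i0 phif pf.
Qed.
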